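(* Let $P,Q\in\Gamma_n$ and $0<r\le R$ with $r\le p_i/q_i\le R$ for all $i$. Let $s,t\in\mathbb{R}$ with $0\le s\le4$. If $s\ge t$ and $s(t-s+6)\ge4(1+t)$, then $$\Big(\frac{r+1}{2}\Big)^{s-t-1}(sr+4-s)\,\Omega_t(Q\|P)\le\zeta_s(P\|Q)\le\Big(\frac{R+1}{2}\Big)^{s-t-1}(sR+4-s)\,\Omega_t(Q\|P).$$ If $s\le t$ and $s(t-s+6)\le4(1+t)$, then $$\Big(\frac{R+1}{2}\Big)^{s-t-1}(sR+4-s)\,\Omega_t(Q\|P)\le\zeta_s(P\|Q)\le\Big(\frac{r+1}{2}\Big)^{s-t-1}(sr+4-s)\,\Omega_t(Q\|P).$$
   Context: $\Gamma_n=\{P=(p_1,\dots,p_n): p_i>0,\ \sum_i p_i=1\}$, $n\ge2$. For $P,Q\in\Gamma_n$ and $s\in\mathbb{R}$: $\Omega_s(Q\|P)=[s(s-1)]^{-1}\big[\sum_i q_i\big(\frac{p_i+q_i}{2q_i}\big)^s-1\big]$ for $s\ne0,1$; $\Omega_0(Q\|P)=\sum_i q_i\ln\frac{2q_i}{p_i+q_i}$; $\Omega_1(Q\|P)=\sum_i\frac{p_i+q_i}{2}\ln\frac{p_i+q_i}{2q_i}$. $\zeta_s(P\|Q)=(s-1)^{-1}\sum_i(p_i-q_i)\big(\frac{p_i+q_i}{2q_i}\big)^{s-1}$ for $s\ne1$; $\zeta_1(P\|Q)=\sum_i(p_i-q_i)\ln\frac{p_i+q_i}{2q_i}$. *)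

(* Defs.v *)
From Stdlib Require Import Reals.
Open Scope R_scope.

Fixpoint rsum (n : nat) (f : nat -> R) : R :=
  match n with
  | O => 0
  | S m => rsum m f + f m
  end.

(* P in Gamma_n : p_i > 0 for i < n and sum p_i = 1. Coordinates are p 0 .. p (n-1). *)
Definition in_Gamma (n : nat) (p : nat -> R) : Prop :=
  (forall i, (i < n)%nat -> 0 < p i) /\ rsum n p = 1.

Definition rpow (x s : R) : R := Rpower x s.

Definition Omega (n : nat) (s : R) (q p : nat -> R) : R :=
  if Req_EM_T s 0 then
    rsum n (fun i => q i * ln (2 * q i / (p i + q i)))
  else if Req_EM_T s 1 then
    rsum n (fun i => (p i + q i) / 2 * ln ((p i + q i) / (2 * q i)))
  else
    / (s * (s - 1)) *
      (rsum n (fun i => q i * rpow ((p i + q i) / (2 * q i)) s) - 1).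

Definition zeta (n : nat) (s : R) (p q : nat -> R) : R :=
  if Req_EM_T s 1 then
    rsum n (fun i => (p i - q i) * ln ((p i + q i) / (2 * q i)))
  else
    / (s - 1) *
      rsum n (fun i => (p i - q i) * rpow ((p i + q i) / (2 * q i)) (s - 1)).

(* Main.v *)
Require Import Defs.
From Stdlib Require Import Reals Lra Lia.
From Coquelicot Require Import Coquelicot.
Open Scope R_scope.

Definition G (s u : R) : R :=
  if Req_EM_T s 1 then 2 * (u - 1) * ln u
  else 2 * (u - 1) * (Rpower u (s - 1) - 1) / (s - 1).
Definition G1 (s u : R) : R :=
  if Req_EM_T s 1 then 2 * ln u + 2 * (u - 1) / u
  else 2 * ((Rpower u (s - 1) - 1) + (u - 1) * (s - 1) * (Rpower u (s - 1) / u)) / (s - 1).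
Definition G2 (s u : R) : R := 2 * Rpower u (s - 1) / (u * u) * (s * u - s + 2).

Lemma G_d s c : 0 < c -> is_derive (G s) c (G1 s c).
Proof.
  intros Hc. unfold G, G1. destruct (Req_EM_T s 1) as [->|Hs].
  - auto_derive; [lra|]. field. lra.
  - unfold Rpower. auto_derive; [lra|]. field. split; lra.
Qed.

Lemma G1_d s c : 0 < c -> is_derive (G1 s) c (G2 s c).
Proof.
  intros Hc. unfold G2, G1. destruct (Req_EM_T s 1) as [->|Hs].
  - auto_derive; [lra|]. replace (1-1) with 0 by ring. rewrite Rpower_O by lra. field. lra.
  - unfold Rpower. auto_derive; [lra|]. field. split; lra.
Qed.

Definition Ph (t u : R) : R :=
  if Req_EM_T t 0 then - ln u + (u - 1)
  else if Req_EM_T t 1 then u * ln u - (u - 1)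
  else (Rpower u t - 1 - t * (u - 1)) / (t * (t - 1)).
Definition Ph1 (t u : R) : R :=
  if Req_EM_T t 0 then - / u + 1
  else if Req_EM_T t 1 then ln u
  else (t * (Rpower u t / u) - t) / (t * (t - 1)).
Definition Ph2 (t u : R) : R := Rpower u t / (u * u).

Lemma Ph_d t c : 0 < c -> is_derive (Ph t) c (Ph1 t c).
Proof.
  intros Hc. unfold Ph, Ph1. destruct (Req_EM_T t 0) as [->|H0].
  - auto_derive; [lra|]. field. lra.
  - destruct (Req_EM_T t 1) as [->|H1].
    + auto_derive; [lra|]. field. lra.
    + unfold Rpower. auto_derive; [lra|]. field. repeat split; lra.
Qed.

Lemma Ph1_d t c : 0 < c -> is_derive (Ph1 t) c (Ph2 t c).
Proof.
  intros Hc. unfold Ph2, Ph1. destruct (Req_EM_T t 0) as [->|H0].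
  - auto_derive; [lra|]. rewrite Rpower_O by lra. field. lra.
  - destruct (Req_EM_T t 1) as [->|H1].
    + auto_derive; [lra|]. rewrite Rpower_1 by lra. field. lra.
    + unfold Rpower. auto_derive; [lra|]. field. repeat split; lra.
Qed.

Definition Hf (a s u : R) : R := Rpower u a * (2 * s * u - 2 * s + 4).
Definition Hf1 (a s u : R) : R := Rpower u a / u * (a * (2 * s * u - 2 * s + 4) + 2 * s * u).
Lemma Hf_d a s c : 0 < c -> is_derive (Hf a s) c (Hf1 a s c).
Proof.
  intros Hc. unfold Hf, Hf1, Rpower. auto_derive; [lra|]. field. lra.
Qed.

Lemma conv0 (F F1 F2 : R -> R) u : 0 < u ->
  (forall c, 0 < c -> is_derive F c (F1 c)) ->
  (forall c, 0 < c -> is_derive F1 c (F2 c)) ->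
  F 1 = 0 -> F1 1 = 0 ->
  (forall c, Rmin u 1 <= c <= Rmax u 1 -> 0 <= F2 c) -> 0 <= F u.
Proof.
  intros Hu HF HF1 E0 E1 Hpos.
  destruct (Rtotal_order u 1) as [Hlt|[Heq|Hgt]].
  - destruct (MVT_cor2 F F1 u 1 Hlt) as [c [Ec Hc]].
    { intros c Hc. apply is_derive_Reals. apply HF. lra. }
    destruct (MVT_cor2 F1 F2 c 1) as [d [Ed Hd]]; [lra| |].
    { intros d Hd. apply is_derive_Reals. apply HF1. lra. }
    assert (0 <= F2 d).
    { apply Hpos. rewrite Rmin_left, Rmax_right; lra. }
    assert (F u = F2 d * (1 - c) * (1 - u)) by nra.
    rewrite H0. apply Rmult_le_pos; [apply Rmult_le_pos|]; lra.
  - subst. lra.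
  - destruct (MVT_cor2 F F1 1 u Hgt) as [c [Ec Hc]].
    { intros c Hc. apply is_derive_Reals. apply HF. lra. }
    destruct (MVT_cor2 F1 F2 1 c) as [d [Ed Hd]]; [lra| |].
    { intros d Hd. apply is_derive_Reals. apply HF1. lra. }
    assert (0 <= F2 d).
    { apply Hpos. rewrite Rmin_right, Rmax_left; lra. }
    assert (F u = F2 d * (c - 1) * (u - 1)) by nra.
    rewrite H0. apply Rmult_le_pos; [apply Rmult_le_pos|]; lra.
Qed.

Lemma mono_up (f f1 : R -> R) a b : a <= b -> 0 < a ->
  (forall c, 0 < c -> is_derive f c (f1 c)) ->
  (forall c, a <= c <= b -> 0 <= f1 c) -> f a <= f b.
Proof.
  intros Hab Ha Hd Hp. destruct (Req_dec a b) as [->|Hne]; [lra|].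
  destruct (MVT_cor2 f f1 a b) as [c [Ec Hc]]; [lra| |].
  { intros c Hc. apply is_derive_Reals. apply Hd. lra. }
  assert (0 <= f1 c) by (apply Hp; lra). nra.
Qed.

Lemma Rpower1 x : Rpower 1 x = 1.
Proof. unfold Rpower. rewrite ln_1, Rmult_0_r. apply exp_0. Qed.

Lemma G_1 s : G s 1 = 0.
Proof. unfold G. destruct (Req_EM_T s 1); rewrite ?ln_1, ?Rpower1; field_simplify; try lra; auto. Qed.
Lemma G1_1 s : G1 s 1 = 0.
Proof. unfold G1. destruct (Req_EM_T s 1); rewrite ?ln_1, ?Rpower1. lra. unfold Rdiv. rewrite !Rminus_diag. ring. Qed.
Lemma Ph_1 t : Ph t 1 = 0.
Proof. unfold Ph. destruct (Req_EM_T t 0); [|destruct (Req_EM_T t 1)]; rewrite ?ln_1, ?Rpower1. lra. lra.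
  field. split; auto. intro; apply n0; lra. Qed.
Lemma Ph1_1 t : Ph1 t 1 = 0.
Proof. unfold Ph1. destruct (Req_EM_T t 0); [|destruct (Req_EM_T t 1)]; rewrite ?ln_1, ?Rpower1. field. auto.
  field. split; auto. intro; apply n0; lra. Qed.

Lemma F2_eq s t K c : 0 < c ->
  G2 s c - K * Ph2 t c = Rpower c t / (c * c) * (Hf (s - t - 1) s c - K).
Proof.
  intros Hc. unfold G2, Ph2, Hf.
  replace (s - 1) with (t + (s - t - 1)) by ring. rewrite Rpower_plus.
  field. lra.
Qed.

Lemma pt_lower s t K u : 0 < u ->
  (forall c, Rmin u 1 <= c <= Rmax u 1 -> K <= Hf (s - t - 1) s c) ->
  K * Ph t u <= G s u.
Proof.
  intros Hu HK.
  cut (0 <= (fun x => G s x - K * Ph t x) u). { simpl. lra. }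
  apply (conv0 _ (fun x => G1 s x - K * Ph1 t x) (fun x => G2 s x - K * Ph2 t x)); auto.
  - intros c Hc. apply (is_derive_minus (G s) (fun x => K * Ph t x)). now apply G_d.
    apply is_derive_scal. now apply Ph_d.
  - intros c Hc. apply (is_derive_minus (G1 s) (fun x => K * Ph1 t x)). now apply G1_d.
    apply is_derive_scal. now apply Ph1_d.
  - simpl. rewrite G_1, Ph_1. ring.
  - simpl. rewrite G1_1, Ph1_1. ring.
  - intros c Hc. assert (0 < c).
    { revert Hc. unfold Rmin, Rmax. destruct (Rle_dec u 1); lra. }
    rewrite F2_eq by lra. apply Rmult_le_pos.
    + apply Rmult_le_pos. left; apply exp_pos. left; apply Rinv_0_lt_compat; nra.
    + specialize (HK c Hc). lra.
Qed.

Lemma pt_upper s t K u : 0 < u ->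
  (forall c, Rmin u 1 <= c <= Rmax u 1 -> Hf (s - t - 1) s c <= K) ->
  G s u <= K * Ph t u.
Proof.
  intros Hu HK.
  cut (0 <= (fun x => K * Ph t x - G s x) u). { simpl. lra. }
  apply (conv0 _ (fun x => K * Ph1 t x - G1 s x) (fun x => K * Ph2 t x - G2 s x)); auto.
  - intros c Hc. apply (is_derive_minus (fun x => K * Ph t x) (G s)).
    apply is_derive_scal. now apply Ph_d. now apply G_d.
  - intros c Hc. apply (is_derive_minus (fun x => K * Ph1 t x) (G1 s)).
    apply is_derive_scal. now apply Ph1_d. now apply G1_d.
  - simpl. rewrite G_1, Ph_1. ring.
  - simpl. rewrite G1_1, Ph1_1. ring.
  - intros c Hc. assert (0 < c).
    { revert Hc. unfold Rmin, Rmax. destruct (Rle_dec u 1); lra. }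
    replace (K * Ph2 t c - G2 s c) with (- (G2 s c - K * Ph2 t c)) by ring.
    rewrite F2_eq by lra.
    assert (0 <= Rpower c t / (c * c)).
    { apply Rmult_le_pos. left; apply exp_pos. left; apply Rinv_0_lt_compat; nra. }
    specialize (HK c Hc). nra.
Qed.

Lemma mono_down (f f1 : R -> R) a b : a <= b -> 0 < a ->
  (forall c, 0 < c -> is_derive f c (f1 c)) ->
  (forall c, a <= c <= b -> f1 c <= 0) -> f b <= f a.
Proof.
  intros Hab Ha Hd Hp. destruct (Req_dec a b) as [->|Hne]; [lra|].
  destruct (MVT_cor2 f f1 a b) as [c [Ec Hc]]; [lra| |].
  { intros c Hc. apply is_derive_Reals. apply Hd. lra. }
  assert (f1 c <= 0) by (apply Hp; lra). nra.
Qed.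


Lemma rsum_ext n f g : (forall i, (i < n)%nat -> f i = g i) -> rsum n f = rsum n g.
Proof. induction n; intros H; simpl; auto. rewrite IHn by (intros; apply H; lia). rewrite H by lia. auto. Qed.
Lemma rsum_le n f g : (forall i, (i < n)%nat -> f i <= g i) -> rsum n f <= rsum n g.
Proof. induction n; intros H; simpl. lra. assert (f n <= g n) by (apply H; lia).
  assert (rsum n f <= rsum n g) by (apply IHn; intros; apply H; lia). lra. Qed.
Lemma rsum_lin n f p q b c :
  rsum n (fun i => f i + b * p i + c * q i) = rsum n f + b * rsum n p + c * rsum n q.
Proof. induction n; simpl. ring. rewrite IHn. ring. Qed.
Lemma rsum_scal n f k : rsum n (fun i => k * f i) = k * rsum n f.
Proof. induction n; simpl. ring. rewrite IHn. ring. Qed.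

Lemma Omega_eq n t p q : in_Gamma n p -> in_Gamma n q ->
  Omega n t q p = rsum n (fun i => q i * Ph t ((p i + q i) / (2 * q i))).
Proof.
  intros [Pp Sp] [Pq Sq]. symmetry. unfold Omega, Ph.
  destruct (Req_EM_T t 0) as [->|H0].
  - rewrite (rsum_ext n _ (fun i => q i * ln (2 * q i / (p i + q i)) + (1/2) * p i + (-1/2) * q i)).
    + rewrite rsum_lin, Sp, Sq. lra.
    + intros i Hi. specialize (Pp i Hi). specialize (Pq i Hi).
      replace (2 * q i / (p i + q i)) with (/ ((p i + q i) / (2 * q i))) by (field; lra).
      rewrite ln_Rinv by (apply Rdiv_lt_0_compat; lra). field. lra.
  - destruct (Req_EM_T t 1) as [->|H1].
    + rewrite (rsum_ext n _ (fun i => (p i + q i) / 2 * ln ((p i + q i) / (2 * q i)) + (-1/2) * p i + (1/2) * q i)).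
      * rewrite rsum_lin, Sp, Sq. lra.
      * intros i Hi. specialize (Pp i Hi). specialize (Pq i Hi). field. lra.
    + set (k := / (t * (t - 1))).
      rewrite (rsum_ext n _ (fun i => k * (q i * rpow ((p i + q i) / (2 * q i)) t) + (- k * t / 2) * p i + (- k + k * t / 2) * q i)).
      * rewrite rsum_lin, rsum_scal, Sp, Sq. lra.
      * intros i Hi. specialize (Pp i Hi). specialize (Pq i Hi). unfold k, rpow. field.
        repeat split; lra.
Qed.

Lemma zeta_eq n s p q : in_Gamma n p -> in_Gamma n q ->
  zeta n s p q = rsum n (fun i => q i * G s ((p i + q i) / (2 * q i))).
Proof.
  intros [Pp Sp] [Pq Sq]. symmetry. unfold zeta, G.
  destruct (Req_EM_T s 1) as [->|H1].
  - apply rsum_ext. intros i Hi. specialize (Pp i Hi). specialize (Pq i Hi). field. lra.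
  - set (k := / (s - 1)).
    rewrite (rsum_ext n _ (fun i => k * ((p i - q i) * rpow ((p i + q i) / (2 * q i)) (s - 1)) + (- k) * p i + k * q i)).
    * rewrite rsum_lin, rsum_scal, Sp, Sq. lra.
    * intros i Hi. specialize (Pp i Hi). specialize (Pq i Hi). unfold k, rpow. field.
      repeat split; lra.
Qed.

Lemma sum_lower n p q s t K : in_Gamma n p -> in_Gamma n q ->
  (forall i, (i < n)%nat -> forall c, Rmin ((p i + q i) / (2 * q i)) 1 <= c <= Rmax ((p i + q i) / (2 * q i)) 1 ->
     K <= Hf (s - t - 1) s c) ->
  K * Omega n t q p <= zeta n s p q.
Proof.
  intros Gp Gq HK. rewrite (Omega_eq n t p q Gp Gq), (zeta_eq n s p q Gp Gq).
  rewrite <- rsum_scal. apply rsum_le. intros i Hi.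
  destruct Gp as [Pp _]; destruct Gq as [Pq _]. specialize (Pp i Hi); specialize (Pq i Hi).
  replace (K * (q i * Ph t ((p i + q i) / (2 * q i)))) with (q i * (K * Ph t ((p i + q i) / (2 * q i)))) by ring.
  apply Rmult_le_compat_l; [lra|]. apply pt_lower.
  - apply Rdiv_lt_0_compat; lra.
  - now apply HK.
Qed.

Lemma sum_upper n p q s t K : in_Gamma n p -> in_Gamma n q ->
  (forall i, (i < n)%nat -> forall c, Rmin ((p i + q i) / (2 * q i)) 1 <= c <= Rmax ((p i + q i) / (2 * q i)) 1 ->
     Hf (s - t - 1) s c <= K) ->
  zeta n s p q <= K * Omega n t q p.
Proof.
  intros Gp Gq HK. rewrite (Omega_eq n t p q Gp Gq), (zeta_eq n s p q Gp Gq).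
  rewrite <- rsum_scal. apply rsum_le. intros i Hi.
  destruct Gp as [Pp _]; destruct Gq as [Pq _]. specialize (Pp i Hi); specialize (Pq i Hi).
  replace (K * (q i * Ph t ((p i + q i) / (2 * q i)))) with (q i * (K * Ph t ((p i + q i) / (2 * q i)))) by ring.
  apply Rmult_le_compat_l; [lra|]. apply pt_upper.
  - apply Rdiv_lt_0_compat; lra.
  - now apply HK.
Qed.

Lemma E_nonneg s t c : 1/2 <= c -> 0 <= s -> s >= t -> s * (t - s + 6) >= 4 * (1 + t) ->
  0 <= (s - t - 1) * (2 * s * c - 2 * s + 4) + 2 * s * c.
Proof.
  intros. assert (E : (s - t - 1) * (2 * s * c - 2 * s + 4) + 2 * s * c =
    (s * (t - s + 6) - 4 * (1 + t)) + 2 * (s * (s - t)) * (c - 1/2)) by field.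
  rewrite E. assert (0 <= s * (s - t)) by nra.
  assert (0 <= (s * (s - t)) * (c - 1/2)) by nra. lra.
Qed.

Lemma E_nonpos s t c : 1/2 <= c -> 0 <= s -> s <= t -> s * (t - s + 6) <= 4 * (1 + t) ->
  (s - t - 1) * (2 * s * c - 2 * s + 4) + 2 * s * c <= 0.
Proof.
  intros. assert (E : (s - t - 1) * (2 * s * c - 2 * s + 4) + 2 * s * c =
    (s * (t - s + 6) - 4 * (1 + t)) + 2 * (s * (s - t)) * (c - 1/2)) by field.
  rewrite E. assert (s * (s - t) <= 0) by nra.
  assert ((s * (s - t)) * (c - 1/2) <= 0) by nra. lra.
Qed.

Lemma Hf_up s t c1 c2 : 1/2 <= c1 -> c1 <= c2 -> 0 <= s -> s >= t -> s * (t - s + 6) >= 4 * (1 + t) ->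
  Hf (s - t - 1) s c1 <= Hf (s - t - 1) s c2.
Proof.
  intros. apply (mono_up _ (Hf1 (s - t - 1) s)); try lra.
  - intros; now apply Hf_d.
  - intros c Hc. unfold Hf1. apply Rmult_le_pos.
    + apply Rmult_le_pos. left; apply exp_pos. left; apply Rinv_0_lt_compat; lra.
    + apply E_nonneg; lra.
Qed.

Lemma Hf_down s t c1 c2 : 1/2 <= c1 -> c1 <= c2 -> 0 <= s -> s <= t -> s * (t - s + 6) <= 4 * (1 + t) ->
  Hf (s - t - 1) s c2 <= Hf (s - t - 1) s c1.
Proof.
  intros. apply (mono_down _ (Hf1 (s - t - 1) s)); try lra.
  - intros; now apply Hf_d.
  - intros c Hc. unfold Hf1.
    assert (0 <= Rpower c (s - t - 1) / c).
    { apply Rmult_le_pos. left; apply exp_pos. left; apply Rinv_0_lt_compat; lra. }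
    assert (E := E_nonpos s t c). nra.
Qed.

Theorem theorem4p1 (n : nat) (p q : nat -> R) (r R0 s t : R) :
  (2 <= n)%nat ->
  in_Gamma n p -> in_Gamma n q ->
  0 < r -> r <= R0 ->
  (forall i, (i < n)%nat -> r <= p i / q i /\ p i / q i <= R0) ->
  0 <= s -> s <= 4 ->
  (s >= t -> s * (t - s + 6) >= 4 * (1 + t) ->
     rpow ((r + 1) / 2) (s - t - 1) * (s * r + 4 - s) * Omega n t q p
       <= zeta n s p q /\
     zeta n s p q
       <= rpow ((R0 + 1) / 2) (s - t - 1) * (s * R0 + 4 - s) * Omega n t q p) /\
  (s <= t -> s * (t - s + 6) <= 4 * (1 + t) ->
     rpow ((R0 + 1) / 2) (s - t - 1) * (s * R0 + 4 - s) * Omega n t q p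
       <= zeta n s p q /\
     zeta n s p q
       <= rpow ((r + 1) / 2) (s - t - 1) * (s * r + 4 - s) * Omega n t q p).
Proof.
  intros Hn Gp Gq Hr HrR Hx Hs0 Hs4.
  assert (Gp' := Gp); assert (Gq' := Gq).
  destruct Gp' as [Pp Sp]; destruct Gq' as [Pq Sq].
  assert (Hr1 : r <= 1).
  { assert (rsum n (fun i => r * q i) <= rsum n p).
    { apply rsum_le. intros i Hi. destruct (Hx i Hi) as [H1 _].
      specialize (Pq i Hi). assert (p i / q i * q i = p i) by (field; lra). nra. }
    rewrite rsum_scal, Sp, Sq in H. lra. }
  assert (HR1 : 1 <= R0).
  { assert (rsum n p <= rsum n (fun i => R0 * q i)).
    { apply rsum_le. intros i Hi. destruct (Hx i Hi) as [_ H1].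
      specialize (Pq i Hi). assert (p i / q i * q i = p i) by (field; lra). nra. }
    rewrite rsum_scal, Sp, Sq in H. lra. }
  assert (Rng : forall i, (i < n)%nat -> forall c,
     Rmin ((p i + q i) / (2 * q i)) 1 <= c <= Rmax ((p i + q i) / (2 * q i)) 1 ->
     (r + 1) / 2 <= c <= (R0 + 1) / 2).
  { intros i Hi c Hc. destruct (Hx i Hi) as [H1 H2]. specialize (Pq i Hi).
    assert (E : (p i + q i) / (2 * q i) = (p i / q i + 1) / 2) by (field; lra).
    rewrite E in Hc. revert Hc. unfold Rmin, Rmax.
    destruct (Rle_dec ((p i / q i + 1) / 2) 1); lra. }
  assert (Cr : rpow ((r + 1) / 2) (s - t - 1) * (s * r + 4 - s) = Hf (s - t - 1) s ((r + 1) / 2)).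
  { unfold rpow, Hf. f_equal. field. }
  assert (CR : rpow ((R0 + 1) / 2) (s - t - 1) * (s * R0 + 4 - s) = Hf (s - t - 1) s ((R0 + 1) / 2)).
  { unfold rpow, Hf. f_equal. field. }
  rewrite Cr, CR. split; intros H1 H2; split.
  - apply sum_lower; auto. intros i Hi c Hc. specialize (Rng i Hi c Hc).
    apply Hf_up; lra.
  - apply sum_upper; auto. intros i Hi c Hc. specialize (Rng i Hi c Hc).
    apply Hf_up; lra.
  - apply sum_lower; auto. intros i Hi c Hc. specialize (Rng i Hi c Hc).
    apply Hf_down; lra.
  - apply sum_upper; auto. intros i Hi c Hc. specialize (Rng i Hi c Hc).
    apply Hf_down; lra.
Qed.
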